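(* Let $q$ be a prime power, $m\ge2$ an integer, $n=q^m-1$, and $\delta_{\max}=q^{\lceil m/2\rceil}-1-(q-2)[m\text{ odd}]$. If $2\le\delta\le\delta_{\max}$, then the Euclidean dual code $C^\perp$ of $C=\mathcal{BCH}(n,q;\delta)$ has minimum distance $d^\perp\ge\delta_{\max}+1$.
   Context: Let $\alpha$ be a primitive element of $\mathbf{F}_{q^m}$ and $n=q^m-1$; $C_x=\{xq^k\bmod n\mid k\in\mathbf{Z}\}$. For $2\le\delta\le n$, $\mathcal{BCH}(n,q;\delta)$ is the cyclic code of length $n$ over $\mathbf{F}_q$ with generator polynomial $\prod_{z\in Z}(x-\alpha^z)$, where $Z=C_1\cup\cdots\cup C_{\delta-1}$. $C^\perp=\{y\in\mathbf{F}_q^n\mid x\cdot y=0\ \forall x\in C\}$. Iverson notation: $[P]=1$ if $P$ holds, $0$ otherwise. *)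

(* Defs.v *)
From HB Require Import structures.
From mathcomp Require Import all_boot all_order all_algebra all_field.
Set Implicit Arguments. Unset Strict Implicit. Unset Printing Implicit Defensive.
Import GRing.Theory.
Local Open Scope ring_scope.

(* Z = C_1 u ... u C_{delta-1}, as a set of exponents modulo n.
   C_j = { j q^k mod n | k } ; since q^m = 1 mod n, k ranges over 0..m-1. *)
Definition bch_Z (q m n delta : nat) : {set 'I_n} :=
  [set z : 'I_n | [exists j : 'I_n, (0 < j < delta)%N &&
       [exists k : 'I_m, val z == ((j * q ^ k) %% n)%N]]].

Definition bch_gen (L : fieldType) (alpha : L) (q m n delta : nat) : {poly L} :=
  \prod_(z in bch_Z q m n delta) ('X - (alpha ^+ z)%:P).

(* BCH(n,q;delta): words c of length n over F = F_q whose polynomial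
   c(x) = sum_i c_i x^i is a multiple of the generator polynomial
   (F is embedded in L by the field morphism f). *)
Definition BCH_code (F : finFieldType) (L : fieldType) (f : {rmorphism F -> L})
  (alpha : L) (q m n delta : nat) : {set 'rV[F]_n} :=
  [set c : 'rV[F]_n |
     bch_gen alpha q m n delta %| \sum_(i < n) (f (c 0 i))%:P * 'X^i].

Definition dual_code (F : finFieldType) (n : nat) (C : {set 'rV[F]_n}) :
  {set 'rV[F]_n} :=
  [set y : 'rV[F]_n | [forall x in C, \sum_(i < n) x 0 i * y 0 i == 0]].

Definition hweight (F : finFieldType) (n : nat) (y : 'rV[F]_n) : nat :=
  #|[set i : 'I_n | y 0 i != 0]|.

Definition delta_max (q m : nat) : nat :=
  (q ^ uphalf m - 1 - (q - 2) * odd m)%N.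

(* Main.v *)
Require Import Defs.
From HB Require Import structures.
From mathcomp Require Import all_boot all_order all_algebra all_field.
From mathcomp Require Import all_solvable zify.
Import GRing.Theory.

Lemma rot_core (e a b X Y M : nat) :
  e = a * X + b -> (b < X)%N -> (0 < Y)%N -> X * Y = M ->
  ((e * Y) %% (M - 1) <= a + b * Y)%N.
Proof.
move=> -> bX Y0 <-.
have -> : (a * X + b) * Y = a * (X * Y - 1) + (a + b * Y).
  have M1 : (1 <= X * Y) by nia.
  rewrite mulnBr muln1 mulnDl mulnA addnA subnK //; nia.
by rewrite modnMDl leq_mod.
Qed.

Lemma lemQ q Q a : (2 <= q)%N -> (1 <= Q)%N -> (a * q <= q * Q - q)%N -> (a + 1 <= Q)%N.
Proof. move=> q2 Q1 h. have h' : (a * q < Q * q)%N by nia. rewrite ltn_pmul2r in h'; lia. Qed.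
Lemma lemA q Q a Z Y : (2 <= q)%N -> (2 <= Q)%N -> (Z <= q*Q*Q - Y)%N -> (q*(q*Q) <= Y)%N ->
  (Y <= q*Q*Q)%N -> (a+1 <= Q)%N -> (a + Z + (q*Q - 1 - (q-2)*1) <= q*Q*Q - 1)%N.
Proof. move=> q2 Q2 hZ hY hY2 ha.
have : (Q + q * Q <= q * (q * Q))%N by nia.
lia. Qed.
Lemma lemC q Q a e Z Y : (2 <= q)%N -> (2 <= Q)%N -> (Z <= Q*Q - Y)%N -> (q*Q <= Y)%N ->
  (Y <= Q*Q)%N -> (a <= e)%N -> (e < Q - 1 - (q-2)*0)%N -> (a + Z + (Q - 1 - (q-2)*0) <= Q*Q - 1)%N.
Proof. move=> q2 Q2 hZ hY hY2 ha he.
have : (2 * Q <= q * Q)%N by nia.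
lia. Qed.
Lemma lemB q Q a b : (2 <= q)%N -> (2 <= Q)%N -> (b < Q)%N -> (a*Q + b < q*Q - 1 - (q-2)*1)%N ->
   (a + b*(q*Q) + (q*Q - 1 - (q-2)*1) <= q*Q*Q - 1)%N.
Proof. move=> q2 Q2 bQ h.
have aq : (a < q)%N.
  have : (a * Q < q * Q)%N by lia.
  by rewrite ltn_pmul2r; lia.
case: (leqP a (q - 2)) => aq2.
- have : (b * (q * Q) <= (Q - 1) * (q * Q))%N by apply: leq_mul; lia.
  rewrite mulnBl mul1n => h1.
  have : (q * Q <= (Q * (q * Q)))%N by nia.
  have : (Q * (q*Q) = q*Q*Q)%N by rewrite mulnC.
  lia.
- have a1 : a = (q - 1)%N by lia.
  subst a.
  have bq : (b + q <= Q)%N.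
    rewrite mulnBl mul1n in h.
    have : (q <= q * Q)%N by nia.
    have : (Q <= q * Q)%N by nia.
    lia.
  have : (b * (q * Q) <= (Q - q) * (q * Q))%N by apply: leq_mul; lia.
  rewrite mulnBl => h1.
  have : (q * (q * Q) <= (Q * (q * Q)))%N by nia.
  have : (Q * (q*Q) = q*Q*Q)%N by rewrite mulnC.
  have : (2 * (q * Q) <= q * (q * Q))%N by nia.
  have : (1 <= q * Q)%N by nia.
  lia.
Qed.

Lemma rot_bound q m e t : (2 <= q)%N -> (2 <= m)%N -> (e < delta_max q m)%N -> (t < m)%N ->
  ((e * q ^ t) %% (q ^ m - 1) + delta_max q m <= q ^ m - 1)%N.
Proof.
move=> q2 m2 eD tm.
have Hm := odd_double_half m.
have Hu := uphalf_half m.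
rewrite /delta_max in eD *; rewrite Hu in eD *.
set u := m./2 in Hm Hu eD *.
have u1 : (1 <= u)%N by case: (odd m) Hm => /= Hm; lia.
set Q := q ^ u.
have Q2 : (2 <= Q)%N by rewrite /Q; apply: (leq_trans q2); rewrite -{1}(expn1 q) leq_pexp2l //; lia.
have qpos : (0 < q)%N by lia.
have Yp : (0 < q ^ t)%N by rewrite expn_gt0 qpos.
case: (leqP t u) => tu.
  have h1 : ((e * q ^ t) %% (q ^ m - 1) <= e * Q)%N.
    apply: leq_trans (leq_mod _ _) _; apply: leq_mul => //; rewrite leq_pexp2l //.
  case: (odd m) Hm eD => /= Hm eD.
  - have Mq : (q ^ m = q * Q * Q)%N by rewrite -Hm -addnn /Q -mulnA -!expnD add1n expnS.
    have -> : (q ^ (1 + u) = q * Q)%N by rewrite add1n expnS.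
    rewrite Mq in h1 *.
    rewrite add1n expnS in eD. rewrite -/Q in eD. nia.
  - have Mq : (q ^ m = Q * Q)%N by rewrite -Hm add0n -addnn /Q -expnD.
    rewrite Mq in h1 *.
    rewrite add0n -/Q in eD *. nia.
set s := m - t.
have XY : (q ^ s * q ^ t = q ^ m)%N by rewrite -expnD /s subnK //; lia.
have Xp : (0 < q ^ s)%N by rewrite expn_gt0 qpos.
have := @rot_core _ _ _ _ _ _ (divn_eq e (q ^ s)) (ltn_pmod e Xp) Yp XY.
set a := e %/ q ^ s; set b := e %% q ^ s => Hrot.
have eab : e = (a * q ^ s + b)%N := divn_eq e (q ^ s).
have ea : (a * q ^ s <= e)%N by apply: leq_divM.
have bX : (b < q ^ s)%N by rewrite ltn_pmod.
have bY : (b * q ^ t <= q ^ m - q ^ t)%N.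
  rewrite -XY; have := leq_mul bX (leqnn (q ^ t)); rewrite mulSn; lia.
have Ym : (q ^ t <= q ^ m)%N by rewrite leq_pexp2l //; lia.
apply: leq_trans (leq_add Hrot (leqnn _)) _.
case: (odd m) Hm eD => /= Hm eD.
- have Mq : (q ^ m = q * Q * Q)%N by rewrite -Hm -addnn /Q -mulnA -!expnD add1n expnS.
  have -> : (q ^ (1 + u) = q * Q)%N by rewrite add1n expnS.
  rewrite add1n expnS -/Q in eD.
  have s1 : (1 <= s)%N by rewrite /s; lia.
  case: (ltnP s u) => su.
  + have Yb : (q * (q * Q) <= q ^ t)%N.
      rewrite /Q -!expnS leq_pexp2l //; rewrite /s in su; lia.
    have Xq : (q <= q ^ s)%N by rewrite -{1}(expn1 q) leq_pexp2l.
    have aQ : (a * q <= q * Q - q)%N by apply: leq_trans (leq_mul (leqnn a) Xq) _; lia.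
    have aQ' : (a + 1 <= Q)%N by apply: (@lemQ q Q a q2 _ aQ); lia.
    rewrite Mq in bY Ym *. exact: (@lemA _ _ _ _ _ q2 Q2 bY Yb Ym aQ').
  + have ss : s = u by rewrite /s in su *; lia.
    have tt : t = u.+1 by rewrite /s in ss; lia.
    rewrite ss -/Q in ea bX bY XY Mq *. rewrite tt expnS -/Q in Hrot bY XY Ym *.
    rewrite Mq; apply: lemB => //; move: eD; rewrite eab ss; exact: id.
- have Mq : (q ^ m = Q * Q)%N by rewrite -Hm ?add0n -addnn /Q -expnD.
  rewrite ?add0n -/Q in eD *.
  have Yb : (q * Q <= q ^ t)%N by rewrite /Q -expnS leq_pexp2l.
  have ae : (a <= e)%N.
    apply: leq_trans ea; rewrite -{1}(muln1 a) leq_mul2l; lia.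
  rewrite Mq in bY Ym *. exact: (@lemC _ _ _ _ _ _ q2 Q2 bY Yb Ym ae eD).
Qed.

Lemma powmod q m x : (0 < q)%N -> (q ^ x = q ^ (x %% m) %[mod q ^ m - 1])%N.
Proof.
move=> q0; rewrite {1}(divn_eq x m); set r := x %% m; elim: (x %/ m) => [|c IH].
  by rewrite mul0n add0n.
have qm : (q ^ m = (q ^ m - 1) + 1)%N by rewrite subnK // expn_gt0 q0.
by rewrite mulSn -addnA expnD {1}qm mulnDl mul1n (mulnC (q ^ m - 1)) modnMDl.
Qed.

Lemma no_wrap q m e j k k' : (2 <= q)%N -> (2 <= m)%N -> (e < delta_max q m)%N ->
  (0 < j < delta_max q m)%N -> (k < m)%N -> (k' < m)%N ->
  ~~ (q ^ m - 1 %| e * q ^ k + (j * q ^ k') %% (q ^ m - 1))%N.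
Proof.
move=> q2 m2 eD /andP[j0 jD] km k'm; set n := (q ^ m - 1)%N.
have q0 : (0 < q)%N by lia.
have qm : (q ^ m = n.+1)%N by rewrite /n subn1 prednK // expn_gt0 q0.
have cop : coprime n (q ^ k').
  have cqn : coprime q n by rewrite -(@coprime_pexpl m q n) ?qm ?coprimeSn //; lia.
  rewrite coprime_sym; case: k' k'm => [|k'] _; first by rewrite expn0 coprime1n.
  by rewrite coprime_pexpl.
have m0 : (0 < m)%N by lia.
set t := ((k + (m - k')) %% m)%N.
have tm : (t < m)%N by rewrite ltn_pmod.
have tk : ((t + k') %% m = k)%N.
  by rewrite /t modnDml -addnA subnK ?(ltnW k'm) // modnDr modn_small.
have qt : (q ^ t * q ^ k' = q ^ k %[mod n])%N by rewrite -expnD (@powmod q m (t + k')) // tk.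
apply/negP => H.
have H2 : (n %| (e * q ^ t + j) * q ^ k')%N.
  move: H; rewrite /dvdn => /eqP H; apply/eqP; rewrite -H.
  rewrite modnDmr mulnDl -mulnA -modnDml -modnMmr qt modnMmr modnDml //.
have H3 : (n %| e * q ^ t + j)%N by move: H2; rewrite Gauss_dvdl.
have H4 : (n %| (e * q ^ t) %% n + j)%N by rewrite /dvdn modnDml.
have rb := @rot_bound q m e t q2 m2 eD tm.
have := dvdn_leq (_ : 0 < (e * q ^ t) %% n + j)%N H4.
rewrite -/n in rb. move: rb; set r := ((e * q ^ t) %% n)%N.
move: jD j0; set D := delta_max q m.
clear -r. move=> jD j0 rb h. have {}h := h (ltn_addl _ j0). lia.
Qed.

Set Implicit Arguments. Unset Strict Implicit.
Local Open Scope ring_scope.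

Section Alg.
Variables (F L : finFieldType) (f : {rmorphism F -> L}) (q m : nat).
Hypotheses (HF : #|F| = q) (Hm : (2 <= m)%N) (HL : #|L| = (q ^ m)%N).

Lemma q2 : (2 <= q)%N. Proof. by rewrite -HF finNzRing_gt1. Qed.

Lemma pnat_q : [pchar L].-nat q.
Proof.
have [p pr pc] := finPcharP F.
have pg := abelem_pgroup (fin_ring_pchar_abelem pc).
rewrite /pgroup cardsT HF in pg.
apply: sub_in_pnat pg => r _; rewrite inE => /eqP ->; exact: rmorph_pchar pc.
Qed.

Lemma frobD k (x y : L) : (x + y) ^+ (q ^ k) = x ^+ (q ^ k) + y ^+ (q ^ k).
Proof. by apply: exprDn_pchar; rewrite pnatX pnat_q. Qed.

Lemma frob0 k : (0 : L) ^+ (q ^ k) = 0.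
Proof. by rewrite expr0n expn_eq0; have := q2; case: q. Qed.

Lemma frob_sum k N (g : 'I_N -> L) :
  (\sum_(i < N) g i) ^+ (q ^ k) = \sum_(i < N) (g i) ^+ (q ^ k).
Proof. exact: (big_morph (fun x => x ^+ (q ^ k)) (frobD k) (frob0 k)). Qed.

Lemma fq k a : (f a) ^+ (q ^ k) = f a.
Proof.
elim: k => [|k IH]; first by rewrite expr1.
by rewrite expnSr exprM IH -rmorphXn -HF expf_card.
Qed.

Lemma xqm (x : L) : x ^+ (q ^ m) = x.
Proof. by rewrite -HL expf_card. Qed.

Definition Tr (x : L) := \sum_(k < m) x ^+ (q ^ k).

Lemma TrD x y : Tr (x + y) = Tr x + Tr y.
Proof. by rewrite /Tr -big_split; apply: eq_bigr => k _; rewrite frobD. Qed.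

Lemma Tr0 : Tr 0 = 0.
Proof. by rewrite /Tr big1 // => k _; rewrite frob0. Qed.

Lemma Tr_sum N (g : 'I_N -> L) : Tr (\sum_(i < N) g i) = \sum_(i < N) Tr (g i).
Proof. exact: (big_morph Tr TrD Tr0). Qed.

Lemma TrfM a x : Tr (f a * x) = f a * Tr x.
Proof. by rewrite /Tr mulr_sumr; apply: eq_bigr => k _; rewrite exprMn fq. Qed.

Lemma Tr_q x : (Tr x) ^+ q = Tr x.
Proof.
have -> : (Tr x) ^+ q = (Tr x) ^+ (q ^ 1) by rewrite expn1.
rewrite /Tr frob_sum.
have [m' em] : exists m', m = m'.+1 by exists m.-1; rewrite prednK //; lia.
have xm := xqm x; rewrite em in xm *.
rewrite big_ord_recr big_ord_recl /= -exprM expn1 -expnSr xm expn0 expr1 addrC.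
congr (_ + _); apply: eq_bigr => k _; rewrite -exprM -expnSr /bump leq0n add1n //.
Qed.

Lemma fixed_inF (x : L) : x ^+ q = x -> exists a, f a = x.
Proof.
move=> xq; suff: [exists a, f a == x] by case/existsP => a /eqP; exists a.
case: (boolP [exists a, f a == x]) => //; rewrite negb_exists => /forallP Hn; exfalso.
pose rs := x :: [seq f a | a <- enum F].
pose p : {poly L} := 'X^q - 'X.
have sp : size p = q.+1.
  by rewrite /p size_polyDl ?size_polyXn // size_polyN size_polyX; have := q2; lia.
have p0 : p != 0 by rewrite -size_poly_gt0 sp.
suff : (size rs < size p)%N by rewrite sp /= size_map -cardE HF ltnn.
apply: max_poly_roots => //.
- apply/allP => z; rewrite inE => /orP[/eqP -> | /mapP [a _ ->]];
   rewrite rootE !hornerE ?xq ?subrr //.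
  by rewrite -rmorphXn -HF expf_card subrr.
- rewrite /= map_inj_uniq ?enum_uniq ?andbT; last exact: fmorph_inj.
  apply/mapP => [[a _ xa]]; have := Hn a; by rewrite xa eqxx.
Qed.

Lemma Tr_nondeg g : (forall b, Tr (b * g) = 0) -> g = 0.
Proof.
move=> H; apply/eqP; case: (boolP (g == 0)) => // g0; exfalso.
have T0 : forall x, Tr x = 0 by move=> x; rewrite -(divfK g0 x) H.
have [m' em] : exists m', m = m'.+1 by exists m.-1; rewrite prednK //; lia.
pose P : {poly L} := \sum_(k < m) 'X^(q ^ k).
have PE : forall x, P.[x] = Tr x.
  by move=> x; rewrite /P horner_sum; apply: eq_bigr => k _; rewrite hornerXn.
have P0 : P != 0.
  apply/negP => /eqP /(congr1 (fun p : {poly L} => p`_(q ^ m'))).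
  rewrite coef0 /P coef_sum em (bigD1 ord_max) //= coefXn eqxx big1 ?addr0.
    by move/eqP; rewrite oner_eq0.
  move=> k kne; rewrite coefXn eqn_exp2l ?q2 //.
  case: eqP => // hk; exfalso; move/negP: kne; apply; apply/eqP/val_inj => /=; exact/esym.
have sP : (size P <= (q ^ m').+1)%N.
  apply: leq_trans (size_sum _ _ _) _; apply/bigmax_leqP => k _.
  have q0 : (0 < q)%N by have := q2; lia.
  rewrite size_polyXn ltnS leq_pexp2l //; have := ltn_ord k; lia.
have := max_poly_roots P0 (_ : all (root P) (enum L)) (enum_uniq _).
have -> : all (root P) (enum L) by apply/allP => x _; rewrite rootE PE T0.
move=> /(_ isT); rewrite -cardE HL em expnS => h.
have := leq_trans h sP; have := q2.
have : (0 < q ^ m')%N by rewrite expn_gt0; have := q2; case: q.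
set Q := (q ^ m')%N; nia.
Qed.

End Alg.

Section BCH.
Variables (F L : finFieldType) (f : {rmorphism F -> L}) (n : nat) (alpha : L).
Hypothesis Hprim : n.-primitive_root alpha.

Lemma alpha_inj (i j : 'I_n) : (alpha ^+ i == alpha ^+ j) = (i == j).
Proof. by rewrite (eq_prim_root_expr Hprim) !modn_small. Qed.

Lemma bch_bound D (y : 'rV[F]_n) : y != 0 ->
  (forall e, (e < D)%N -> \sum_(i < n) f (y 0 i) * alpha ^+ (i * e) = 0) ->
  (D < hweight y)%N.
Proof.
move=> y0 HG; rewrite ltnNge; apply/negP => wD.
have [i0 yi0] : exists i0, y 0 i0 != 0.
  case: (boolP [exists i, y 0 i != 0]) => [/existsP //|].
  rewrite negb_exists => /forallP H; case/negP: y0; apply/eqP/rowP => i.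
  by rewrite mxE; apply/eqP; move: (H i); rewrite negbK.
set S := [set i | y 0 i != 0].
have i0S : i0 \in S by rewrite inE.
pose P : {poly L} := \prod_(i in S :\ i0) ('X - (alpha ^+ i)%:P).
have sP : (size P <= D)%N.
  rewrite /P -big_enum size_prod_XsubC -cardE.
  move: wD; rewrite /hweight -/S (cardsD1 i0 S) i0S //.
have E0 : \sum_(e < D) P`_e * \sum_(i < n) f (y 0 i) * alpha ^+ (i * e) = 0.
  by rewrite big1 // => e _; rewrite HG ?mulr0.
have E1 : \sum_(e < D) P`_e * \sum_(i < n) f (y 0 i) * alpha ^+ (i * e) =
          \sum_(i < n) f (y 0 i) * P.[alpha ^+ i].
  under eq_bigr => e _ do rewrite mulr_sumr.
  rewrite exchange_big /=; apply: eq_bigr => i _.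
  rewrite (horner_coef_wide _ sP) mulr_sumr; apply: eq_bigr => e _.
  by rewrite mulrCA exprM.
have E2 : \sum_(i < n) f (y 0 i) * P.[alpha ^+ i] = f (y 0 i0) * P.[alpha ^+ i0].
  rewrite (bigD1 i0) //= big1 ?addr0 // => i ii0.
  case: (boolP (y 0 i == 0)) => [/eqP -> | yi]; first by rewrite rmorph0 mul0r.
  have iS : i \in S :\ i0 by rewrite !inE ii0 yi.
  by rewrite /P horner_prod (bigD1 i) //= hornerXsubC subrr mul0r mulr0.
move: E0; rewrite E1 E2 => /eqP; rewrite mulf_eq0 fmorph_eq0 (negbTE yi0) /=.
apply/negP; rewrite /P horner_prod; apply/prodf_neq0 => j jS.
rewrite hornerXsubC subr_eq0 alpha_inj.
by move: jS; rewrite !inE eq_sym => /andP [].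
Qed.
End BCH.

Section Code.
Variables (F L : finFieldType) (f : {rmorphism F -> L}) (q m : nat) (alpha : L) (delta : nat).
Hypotheses (HF : #|F| = q) (Hm : (2 <= m)%N) (HL : #|L| = (q ^ m)%N).
Let n := (q ^ m - 1)%N.
Hypothesis Hprim : n.-primitive_root alpha.

Lemma geom (g : L) N : g ^+ N = 1 -> g != 1 -> \sum_(i < N) g ^+ i = 0.
Proof.
move=> gN g1; have := subrX1 g N; rewrite gN subrr => /esym/eqP.
by rewrite mulf_eq0 subr_eq0 (negbTE g1) /= => /eqP.
Qed.

Lemma code_in (b : L) (e : nat) (c : 'rV[F]_n) :
  (forall i : 'I_n, f (c 0 i) = Tr q m (b * alpha ^+ (i * e))) ->
  (forall z : 'I_n, z \in bch_Z q m n delta -> forall k : 'I_m, ~~ (n %| e * q ^ k + z)%N) ->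
  c \in BCH_code f alpha q m n delta.
Proof.
move=> Hc Hz; rewrite inE /bch_gen -big_enum /=.
rewrite -(big_map (fun z : 'I_n => alpha ^+ z) xpredT (fun r => 'X - r%:P)).
apply: uniq_roots_dvdp.
- apply/allP => r /mapP [z zZ ->]; rewrite mem_enum in zZ.
  rewrite rootE horner_sum.
  under eq_bigr => i _ do rewrite hornerCM hornerXn Hc /Tr mulr_suml.
  rewrite exchange_big /= big1 // => k _.
  under eq_bigr => i _ do rewrite exprMn -!exprM -mulrA -exprD.
  rewrite -mulr_sumr.
  rewrite (eq_bigr (fun i : 'I_n => (alpha ^+ (e * q ^ k + z)) ^+ i)); last by move=> i _; rewrite -exprM; congr (_ ^+ _); lia.
  rewrite geom ?mulr0 //.
    by rewrite exprAC (prim_expr_order Hprim) expr1n.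
  rewrite -(expr0 alpha) (eq_prim_root_expr Hprim) mod0n.
  exact: Hz.
- rewrite uniq_rootsE map_inj_in_uniq ?enum_uniq // => z1 z2 _ _ /eqP.
  by rewrite (alpha_inj Hprim) => /eqP.
Qed.

Lemma dual_gamma (y : 'rV[F]_n) e :
  y \in dual_code (BCH_code f alpha q m n delta) ->
  (forall z : 'I_n, z \in bch_Z q m n delta -> forall k : 'I_m, ~~ (n %| e * q ^ k + z)%N) ->
  \sum_(i < n) f (y 0 i) * alpha ^+ (i * e) = 0.
Proof.
move=> yd Hz; apply: (Tr_nondeg HF Hm HL) => b.
have ex : forall i : 'I_n, exists a, f a == Tr q m (b * alpha ^+ (i * e)).
  move=> i; have [a ha] := fixed_inF f HF Hm HL (Tr_q f HF Hm HL (b * alpha ^+ (i * e))).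
  by exists a; apply/eqP.
pose c : 'rV[F]_n := \row_i xchoose (ex i).
have Hc : forall i : 'I_n, f (c 0 i) = Tr q m (b * alpha ^+ (i * e)).
  by move=> i; rewrite mxE; apply/eqP; exact: (xchooseP (ex i)).
have cC := code_in Hc Hz.
move: yd; rewrite inE => /forallP /(_ c) /implyP /(_ cC) /eqP H.
have := congr1 f H; rewrite rmorph0 rmorph_sum => H'.
rewrite mulr_sumr (Tr_sum f m HF) -[X in _ = X]H'; apply: eq_bigr => i _.
by rewrite rmorphM Hc mulrCA (TrfM f m HF) mulrC.
Qed.
End Code.

Theorem mainTheorem8
  (F L : finFieldType) (f : {rmorphism F -> L}) (q m : nat) (alpha : L)
  (delta : nat) :
  #|F| = q -> (2 <= m)%N -> #|L| = (q ^ m)%N ->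
  (q ^ m - 1)%N.-primitive_root alpha ->
  (2 <= delta <= delta_max q m)%N ->
  forall y : 'rV[F]_(q ^ m - 1),
    y \in dual_code (BCH_code f alpha q m (q ^ m - 1) delta) ->
    y != 0 ->
    (delta_max q m + 1 <= hweight y)%N.
Proof.
move=> HF Hm HL Hprim /andP [d2 dD] y yd y0.
rewrite addn1; apply: (bch_bound Hprim) => // e eD.
apply: (dual_gamma HF Hm HL Hprim yd) => z zZ k.
move: zZ; rewrite inE => /existsP [j /andP [/andP [j0 jd] /existsP [k' /eqP ->]]].
apply: (@no_wrap q m e j k k') => //.
- exact: (q2 HF).
- rewrite j0 /=; exact: leq_trans jd dD.
Qed.
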